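(* If $A\in\{0,1\}^{N\times n}$ is such that every row of $A$ has at most $k$ nonzero entries, then $\mathsf{m}^{rd}(2k+1,A)\ge(2n)^{-2k}(2k)^{-1/4}$.
   Context: For $A\in\{0,1\}^{N\times n}$ and $m\ge0$, unit vectors $U_1,\dots,U_N,V_1,\dots,V_n\in\mathbb{R}^d$ form a margin-$m$, relative-bias-$0$ embedding of $A$ in dimension $d$ if $\langle U_j,V_i\rangle\ge m$ whenever $A_{ji}=1$ and $\langle U_j,V_i\rangle\le -m$ whenever $A_{ji}=0$. $\mathsf{m}^{rd}(d,A)$ is the supremum of $m\ge0$ for which such an embedding exists in dimension $d$ ($-\infty$ if none exists). *)

(* Defs.v *)
From HB Require Import structures.
From mathcomp Require Import all_boot all_order all_algebra.
From mathcomp Require Import all_classical all_reals all_analysis.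
Set Implicit Arguments. Unset Strict Implicit. Unset Printing Implicit Defensive.
Import Order.TTheory GRing.Theory Num.Theory.
Local Open Scope ring_scope.
Local Open Scope classical_set_scope.

Definition dotv (R : realType) (d : nat) (u v : 'rV[R]_d) : R :=
  \sum_(i < d) u ord0 i * v ord0 i.

Definition unitv (R : realType) (d : nat) (u : 'rV[R]_d) : Prop :=
  dotv u u = 1.

(* U_1..U_N, V_1..V_n unit vectors in R^d forming a margin-m, relative-bias-0
   embedding of A. *)
Definition rd_embedding (R : realType) (d N n : nat) (A : 'M[bool]_(N, n))
    (m : R) (U : 'I_N -> 'rV[R]_d) (V : 'I_n -> 'rV[R]_d) : Prop :=
  (forall j, unitv (U j)) /\ (forall i, unitv (V i)) /\
  (forall j i, A j i -> m <= dotv (U j) (V i)) /\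
  (forall j i, ~~ A j i -> dotv (U j) (V i) <= - m).

(* m^rd(d, A): supremum (in the extended reals) of admissible margins m >= 0;
   -oo when no embedding exists (sup of the empty set). *)
Definition mrd {R : realType} (d N n : nat) (A : 'M[bool]_(N, n)) : \bar R :=
  ereal_sup [set (m%:E) | m in
    [set m : R | 0 <= m /\ exists (U : 'I_N -> 'rV[R]_d) (V : 'I_n -> 'rV[R]_d), rd_embedding A m U V]].

(* Main.v *)
Require Import Defs.
From HB Require Import structures.
From mathcomp Require Import all_boot all_order all_algebra.
From mathcomp Require Import all_classical all_reals all_analysis.
From mathcomp Require Import ring lra zify.
Set Implicit Arguments. Unset Strict Implicit.
Import Order.TTheory GRing.Theory Num.Theory.
Local Open Scope ring_scope.

Lemma dotvZ (R : realType) (d : nat) (a b : R) (u v : 'rV[R]_d) :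
  dotv (a *: u) (b *: v) = a * b * dotv u v.
Proof. rewrite /dotv mulr_sumr; apply: eq_bigr => i _; rewrite !mxE; ring. Qed.

Definition nrm (R : realType) (d : nat) (u : 'rV[R]_d) :=
  (Num.sqrt (dotv u u))^-1 *: u.

Lemma dotv_nrm (R : realType) (d : nat) (u v : 'rV[R]_d) :
  dotv (nrm u) (nrm v) = dotv u v / (Num.sqrt (dotv u u) * Num.sqrt (dotv v v)).
Proof. rewrite /nrm dotvZ invfM; ring. Qed.

Lemma unit_nrm (R : realType) (d : nat) (u : 'rV[R]_d) :
  0 < dotv u u -> unitv (nrm u).
Proof.
move=> h; rewrite /unitv dotv_nrm -expr2 sqr_sqrtr ?ltW // divff //.
by rewrite gt_eqF.
Qed.

Lemma dot_row_poly (R : realType) (d : nat) (p : {poly R}) (t : R) :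
  (size p <= d)%N -> dotv (\row_(l < d) p`_l) (\row_(l < d) t ^+ l) = p.[t].
Proof.
move=> h; rewrite (horner_coef_wide t h) /dotv; apply: eq_bigr => l _.
by rewrite !mxE.
Qed.

Lemma dotv_sq_le (R : realType) (d : nat) (u : 'rV[R]_d) :
  dotv u u <= (\sum_(l < d) `|u ord0 l|) ^+ 2.
Proof.
rewrite expr2 mulr_suml /dotv; apply: ler_sum => l _.
have -> : u ord0 l * u ord0 l = `|u ord0 l| * `|u ord0 l|.
  by rewrite -normrM ger0_norm // -expr2 sqr_ge0.
apply: ler_wpM2l; first exact: normr_ge0.
rewrite (bigD1 l) //= lerDl sumr_ge0 // => i _; exact: normr_ge0.
Qed.

Lemma dom_step (R : realType) (p P : {poly R}) (a : R) :
  (forall i, `|p`_i| <= P`_i) -> `|a| <= 1 ->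
  forall i, `|(p * ('X - a%:P))`_i| <= (P * ('X + 1%:P))`_i.
Proof.
move=> h ha i; rewrite mulrBr mulrDr coefB coefD !coefMX !coefMC mulr1.
have a0 := normr_ge0 a.
case: i => [|i] /=.
- rewrite sub0r add0r normrN normrM.
  have := h 0%N; have := normr_ge0 p`_0; nra.
- apply: le_trans (ler_normB _ _) _; apply: lerD; first exact: h.
  rewrite normrM; have := h i.+1; have := normr_ge0 p`_i.+1; nra.
Qed.

Lemma dom_prod (R : realType) (I : finType) (S : {set I}) (t : I -> R) :
  (forall i, `|t i| <= 1) ->
  forall l, `|(\prod_(i in S) ('X - (t i)%:P) ^+ 2)`_l|
              <= (\prod_(i in S) ('X + 1%:P) ^+ 2)`_l.
Proof.
move=> ht.
apply: (big_rec2 (fun (q r : {poly R}) => forall l, `|q`_l| <= r`_l)).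
  by move=> l; rewrite coef1; case: (l == 0%N); rewrite ?normr1 ?normr0.
move=> i y1 y2 _ h.
rewrite ![(_ ^+ 2) * _]mulrC !expr2 !mulrA.
move=> l; apply: (dom_step _ (ht i)) => l'; apply: (dom_step _ (ht i)) => l''.
exact: h.
Qed.

Lemma dotv_ge_coord (R : realType) (d : nat) (u : 'rV[R]_d) (l : 'I_d) :
  u ord0 l ^+ 2 <= dotv u u.
Proof.
rewrite /dotv (bigD1 l) //= -expr2 lerDl sumr_ge0 // => i _.
by rewrite -expr2 sqr_ge0.
Qed.

Lemma key2 (R : realType) (n k s : nat) : (0 < n)%N -> (1 <= k)%N -> (s <= k)%N ->
  (1 + 2 * ((maxn (n - 1) 1) ^ (2 * s))%N%:R) *
    Num.sqrt (if n == 1%N then 1 else (2 * k + 1)%N%:R : R)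
  <= ((2 * n)%N%:R : R) ^+ (2 * k).
Proof.
move=> n0 k1 sk.
set e := (2 * k).-1.
have he : (2 * k = e.+1)%N by rewrite /e prednK // muln_gt0.
case: eqP => [->|/eqP n1].
  rewrite sqrtr1 mulr1 /= exp1n -natrX.
  have : (2 ^ 2 <= 2 ^ (2 * k))%N by rewrite leq_pexp2l //; lia.
  rewrite -(ler_nat R) => h; apply: le_trans h; rewrite natrX; lra.
have n2 : (2 <= n)%N by lia.
have hM : maxn (n - 1) 1 = (n - 1)%N by apply/maxn_idPl; lia.
rewrite hM.
have h1 : ((n - 1) ^ (2 * s) <= (n - 1) ^ (2 * k))%N by rewrite leq_pexp2l //; lia.
have h2 : ((n - 1) ^ (2 * k) < n ^ (2 * k))%N by rewrite ltn_exp2r ?muln_gt0 //; lia.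
have h3 : (1 + 2 * (n - 1) ^ (2 * s) <= 2 * n ^ (2 * k))%N by lia.
have h4 : (2 * e < 2 ^ (2 * e))%N by apply: ltn_expl.
have h5 : (2 * k + 1 <= (2 ^ e) ^ 2)%N by rewrite -expnM [(e * 2)%N]mulnC; lia.
have hs : Num.sqrt ((2 * k + 1)%N%:R : R) <= (2 ^ e)%N%:R.
  rewrite -[X in _ <= X]ger0_norm // -sqrtr_sqr ler_sqrt ?sqr_ge0 //.
  by rewrite -natrX ler_nat.
apply: le_trans (ler_pM _ _ _ hs) _.
- by rewrite addr_ge0 // mulr_ge0.
- exact: sqrtr_ge0.
- by rewrite -(ler_nat R) natrD natrM in h3; exact: h3.
rewrite -natrX -natrM ler_nat expnMn he [(2 ^ e.+1)%N]expnS.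
by rewrite -!mulnA [(n ^ e.+1 * _)%N]mulnC.
Qed.

Lemma key (R : realType) (n k s : nat) : (0 < n)%N -> (1 <= k)%N -> (s <= k)%N ->
  ((4 / ((maxn (n - 1) 1)%N%:R : R) ^+ 2) ^+ s / 2 + 4 ^+ s) *
    Num.sqrt (if n == 1%N then 1 else (2 * k + 1)%N%:R : R)
  <= (4 / ((maxn (n - 1) 1)%N%:R : R) ^+ 2) ^+ s / 2 * ((2 * n)%N%:R ^+ (2 * k)).
Proof.
move=> n0 k1 sk.
have m0 : (0 < (maxn (n - 1) 1) ^ (2 * s))%N by rewrite expn_gt0; lia.
have e1 : (4 / ((maxn (n - 1) 1)%N%:R : R) ^+ 2) ^+ s
          = 4 ^+ s / ((maxn (n - 1) 1) ^ (2 * s))%N%:R.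
  by rewrite expr_div_n -exprM natrX.
rewrite e1.
set m := ((maxn (n - 1) 1) ^ (2 * s))%N.
have mR : (m%:R : R) != 0 by rewrite pnatr_eq0 -lt0n.
have e2 : 4 ^+ s / m%:R / 2 + 4 ^+ s
          = 4 ^+ s / m%:R / 2 * (1 + 2 * m%:R) :> R by field.
rewrite e2 -mulrA; apply: ler_wpM2l.
  by rewrite !mulr_ge0 // ?invr_ge0 // exprn_ge0.
exact: key2.
Qed.

Lemma Tbound (R : realType) (n k : nat) : (0 < n)%N -> (1 <= k)%N ->
  ((2 * n)%N%:R : R) `^ (- ((2 * k)%N%:R)) * ((2 * k)%N%:R : R) `^ (- (1 / 4))
  <= (((2 * n)%N%:R : R) ^+ (2 * k))^-1.
Proof.
move=> n0 k1.
rewrite powRN powR_mulrn // -[X in _ <= X]mulr1.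
apply: ler_wpM2l; first by rewrite invr_ge0 exprn_ge0.
rewrite powRN invf_le1; last by rewrite powR_gt0 // ltr0n muln_gt0.
rewrite -[X in X <= _](powRr0 ((2 * k)%N%:R : R)).
apply: ler_powR; last lra.
by rewrite ler1n muln_gt0.
Qed.
Theorem corollary1p2 (R : realType) (N n k : nat) (A : 'M[bool]_(N, n)) :
  (1 <= k)%N ->
  (forall j : 'I_N, (#|[set i : 'I_n | A j i]| <= k)%N) ->
  (((((2 * n)%N%:R : R) `^ (- ((2 * k)%N%:R)) *
     ((2 * k)%N%:R : R) `^ (- (1 / 4)))%R)%:E
    <= mrd (2 * k + 1)%N A)%E.
Proof.
move=> k1 hrow.
set T := (_ * _)%R.
have T0 : 0 <= T by rewrite /T mulr_ge0 // powR_ge0.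
set d := (2 * k + 1)%N.
set M : nat := maxn (n - 1) 1.
have M1 : (1 <= M)%N by rewrite leq_maxr.
have M0 : 0 < (M%:R : R) by rewrite ltr0n.
pose t (i : 'I_n) : R := (2 * (i : nat)%:R - (n - 1)%N%:R) / M%:R.
have ht : forall i, `|t i| <= 1.
  move=> i; rewrite /t normrM [`|_^-1|]gtr0_norm ?invr_gt0 // ler_pdivrMr // mul1r.
  have hi : ((i : nat) <= n - 1)%N by have := ltn_ord i; lia.
  have hM : (n - 1 <= M)%N by rewrite leq_maxl.
  rewrite -(ler_nat R) in hi; rewrite -(ler_nat R) in hM.
  have h0 := ler0n R i; rewrite ler_norml; apply/andP; split; lra.
have gap : forall i j : 'I_n, i != j -> 4 / (M%:R ^+ 2) <= (t i - t j) ^+ 2.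
  move=> i j ij.
  have -> : t i - t j = 2 * ((i : nat)%:R - (j : nat)%:R) / M%:R.
    by rewrite /t; field; rewrite gt_eqF.
  rewrite expr_div_n ler_pM2r ?invr_gt0 ?exprn_gt0 //.
  have : (1 <= ((i : nat)%:R - (j : nat)%:R) ^+ 2 :> R).
    case: (ltngtP i j) => h.
    - have : ((i : nat).+1%:R <= (j : nat)%:R :> R) by rewrite ler_nat.
      rewrite -addn1 natrD; nra.
    - have : ((j : nat).+1%:R <= (i : nat)%:R :> R) by rewrite ler_nat.
      rewrite -addn1 natrD; nra.
    - by case/eqP: ij; apply: val_inj.
  nra.
have sk : forall j, (#|[set i : 'I_n | A j i]| <= k)%N := hrow.
pose S (j : 'I_N) := [set i : 'I_n | A j i].
pose s j := #|S j|.
pose g : R := 4 / M%:R ^+ 2.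
have g0 : 0 < g by rewrite /g divr_gt0 // exprn_gt0.
pose c j : R := g ^+ s j / 2.
have c0 : forall j, 0 < c j by move=> j; rewrite /c divr_gt0 // exprn_gt0.
pose q j : {poly R} := \prod_(i in S j) ('X - (t i)%:P) ^+ 2.
pose r j : {poly R} := \prod_(i in S j) ('X + 1%:P) ^+ 2.
pose p j := (c j)%:P - q j.
pose w j : 'rV[R]_d := \row_(l < d) (p j)`_l.
pose v i : 'rV[R]_d := \row_(l < d) (t i) ^+ l.
have hr : forall j, r j = ('X + 1%:P) ^+ (2 * s j).
  by move=> j; rewrite /r prodr_const exprM.
have size_r : forall j, (size (r j) <= d)%N.
  move=> j; rewrite hr; apply: leq_trans (size_poly_exp_leq _ _) _.
  rewrite size_XaddC /d; have := sk j; rewrite -/(S j) -/(s j); lia.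
have r1 : forall j, (r j).[1] = 4 ^+ s j.
  move=> j; rewrite hr horner_exp hornerD hornerX hornerC exprM; congr (_ ^+ _).
  rewrite expr2; ring.
have dom : forall j l, `|(q j)`_l| <= (r j)`_l by move=> j; exact: dom_prod.
have size_q : forall j, (size (q j) <= d)%N.
  move=> j; apply/leq_sizeP => l hl.
  have := dom j l; move/leq_sizeP: (size_r j) => /(_ l hl) ->.
  by rewrite normr_le0 => /eqP.
have size_p : forall j, (size (p j) <= d)%N.
  move=> j; apply/leq_sizeP => l hl.
  rewrite coefB coefC (leq_sizeP _ _ (size_q j) l hl) subr0.
  case: eqP => [l0|//]; by move: hl; rewrite l0 /d; lia.
have pev : forall j (i : 'I_n),
    (p j).[t i] = c j - \prod_(i' in S j) (t i - t i') ^+ 2.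
  move=> j i; rewrite /p /q hornerD hornerN hornerC horner_prod; congr (_ - _).
  by apply: eq_bigr => i' _; rewrite horner_exp hornerXsubC.
have pin : forall j i, A j i -> (p j).[t i] = c j.
  move=> j i h; rewrite pev (bigD1 i) /=; last by rewrite inE.
  by rewrite subrr expr2 !mul0r subr0.
have pout : forall j i, ~~ A j i -> (p j).[t i] <= - c j.
  move=> j i h; rewrite pev.
  have : g ^+ s j <= \prod_(i' in S j) (t i - t i') ^+ 2.
    rewrite /s -prodr_const; apply: ler_prod => i' hi'; rewrite (ltW g0) /=.
    apply: gap; apply: (contraNneq _ h) => ->; by rewrite inE in hi'.
  rewrite /c; lra.
have d0 : (0 < d)%N by rewrite /d addn1.
have wpos : forall j, 0 < dotv (w j) (w j).
  move=> j; rewrite lt0r; apply/andP; split; last first.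
    by apply: le_trans (dotv_ge_coord _ (Ordinal d0)); rewrite sqr_ge0.
  apply/negP => /eqP h0.
  have wz : forall l : 'I_d, (p j)`_l = 0.
    move=> l; move/eqP: h0; rewrite /dotv psumr_eq0; last first.
      by move=> l' _; rewrite -expr2 sqr_ge0.
    move/allP => /(_ l (mem_index_enum _)) /=.
    by rewrite mulf_eq0 orbb mxE => /eqP.
  have pz : forall x, (p j).[x] = 0.
    move=> x; rewrite -(dot_row_poly x (size_p j)) /dotv big1 // => l _.
    by rewrite !mxE wz mul0r.
  case: (set_0Vmem (S j)) => [e0|[i hi]].
  - have := pz 0; rewrite /p /q e0 big_set0 hornerD hornerN !hornerC.
    rewrite /c /s e0 cards0 expr0; lra.
  - have := pz (t i); rewrite inE in hi; rewrite pin //.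
    by move=> h; have := c0 j; rewrite h ltxx.
pose B2 : R := if n == 1%N then 1 else (2 * k + 1)%N%:R.
have vle : forall i, dotv (v i) (v i) <= B2.
  move=> i; rewrite /B2; case: eqP => [n1|_].
  - have ti0 : t i = 0.
      rewrite /t; have -> : (i : nat) = 0%N by have := ltn_ord i; lia.
      by rewrite n1 /= mulr0 subr0 mul0r.
    rewrite /dotv (bigD1 (Ordinal d0)) //= big1 ?addr0 => [|l hl]; rewrite !mxE ti0.
      by rewrite expr0 mulr1.
    have : (l : nat) != 0%N.
      by move: hl; apply: contra => /eqP h; apply/eqP/val_inj.
    by move=> /negbTE hl0; rewrite expr0n hl0 mul0r.
  - have h1 : forall l : 'I_d, v i ord0 l * v i ord0 l <= 1.
      move=> l; rewrite mxE -exprMn; apply: exprn_ile1.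
        by rewrite -expr2 sqr_ge0.
      have e : t i * t i = `|t i| * `|t i|.
        by rewrite -normrM ger0_norm // -expr2 sqr_ge0.
      rewrite e; have := ht i; have := normr_ge0 (t i); nra.
    apply: le_trans (_ : _ <= \sum_(l < d) (1:R)) _.
      by apply: ler_sum => l _; exact: h1.
    by rewrite sumr_const card_ord.
have vpos : forall i, 0 < dotv (v i) (v i).
  move=> i; apply: lt_le_trans (dotv_ge_coord _ (Ordinal d0)).
  by rewrite mxE expr0 expr1n.
have wle : forall j, Num.sqrt (dotv (w j) (w j)) <= c j + 4 ^+ s j.
  move=> j.
  have e1 : \sum_(l < d) `|(c j)%:P`_l| = c j.
    rewrite (bigD1 (Ordinal d0)) //= coefC eqxx big1 ?addr0 ?gtr0_norm // => l hl.
    have : (l : nat) != 0%N.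
      by move: hl; apply: contra => /eqP h; apply/eqP/val_inj.
    by move=> /negbTE hl0; rewrite coefC hl0 normr0.
  have e2 : \sum_(l < d) (r j)`_l = 4 ^+ s j.
    rewrite -r1 (horner_coef_wide 1 (size_r j)); apply: eq_bigr => l _.
    by rewrite expr1n mulr1.
  have hsum : \sum_(l < d) `|w j ord0 l| <= c j + 4 ^+ s j.
    rewrite -e1 -e2 -big_split /=; apply: ler_sum => l _; rewrite mxE /p coefB.
    apply: le_trans (ler_normB _ _) _; apply: lerD => //; exact: dom.
  have hpos : 0 <= c j + 4 ^+ s j by rewrite addr_ge0 ?exprn_ge0 // ltW.
  rewrite -[X in _ <= X]ger0_norm // -sqrtr_sqr ler_sqrt ?sqr_ge0 //.
  apply: le_trans (dotv_sq_le _) _.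
  rewrite !expr2; apply: ler_pM => //; by rewrite sumr_ge0 // => l _.
have main : forall j i, T * (Num.sqrt (dotv (w j) (w j)) * Num.sqrt (dotv (v i) (v i)))
    <= c j.
  move=> j i.
  have n0 : (0 < n)%N by apply: leq_ltn_trans (leq0n i) (ltn_ord i).
  apply: le_trans (_ : (((2 * n)%N%:R : R) ^+ (2 * k))^-1
                       * ((c j + 4 ^+ s j) * Num.sqrt B2) <= _).
    apply: ler_pM => //; rewrite ?mulr_ge0 ?sqrtr_ge0 //.
    - exact: Tbound.
    - apply: ler_pM => //; try exact: sqrtr_ge0.
      by rewrite ler_sqrt ?vle // /B2; case: eqP.
  rewrite mulrC ler_pdivrMr ?exprn_gt0 ?ltr0n ?muln_gt0 //.
  exact: key n0 k1 (sk j).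
apply: ereal_sup_ubound; exists T => //; split => //.
exists (fun j => nrm (w j)), (fun i => nrm (v i)).
split; first by move=> j; apply: unit_nrm.
split; first by move=> i; apply: unit_nrm.
have D0 : forall j i, 0 < Num.sqrt (dotv (w j) (w j)) * Num.sqrt (dotv (v i) (v i)).
  by move=> j i; rewrite mulr_gt0 // sqrtr_gt0.
split.
- move=> j i h; rewrite dotv_nrm {1}/w {1}/v dot_row_poly ?size_p // pin //.
  by rewrite ler_pdivlMr //; exact: main.
- move=> j i h; rewrite dotv_nrm {1}/w {1}/v dot_row_poly ?size_p //.
  apply: le_trans (ler_wpM2r _ (pout j i h)) _.
    by rewrite invr_ge0 ltW.
  by rewrite mulNr lerN2 ler_pdivlMr //; exact: main.
Qed.
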